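(* Let $(\Omega,\mathcal{F},\mathbb{P})$ be a nonatomic probability space, let $1\le q<\infty$, let $u(x)=-|x|^q$ for $x<0$ and $u(x)=0$ for $x\ge0$, let $\alpha<0$, and set $\mathcal{A}_u^\infty=\{X\in L^\infty:\mathbb{E}[u(X)]\ge\alpha\}$. Let $S=(S_0,S_T)$ be a traded asset with $S_T\in L^\infty$ and assume $\rho_{\mathcal{A}_u^\infty,S}$ is finite-valued on $L^\infty$. Then $\mathrm{Index}_{\mathrm{fin}}(\rho_{\mathcal{A}_u^\infty,S})=q$ and the infimum defining the index is attained.
   Context: A traded asset is $S=(S_0,S_T)$ with $S_0>0$, $S_T\ge0$ a.s., $S_T\ne0$. For $\mathcal{B}\subset L^\infty$, $\rho_{\mathcal{B},S}(X)=\inf\{m\in\mathbb{R}:X+\frac{m}{S_0}S_T\in\mathcal{B}\}$. For a convex, law-invariant acceptance set $\mathcal{A}\subset L^\infty$ with $\rho_{\mathcal{A},S}$ finite-valued on $L^\infty$, $\mathrm{Index}_{\mathrm{fin}}(\rho_{\mathcal{A},S})=\inf\{p\in[1,\infty):\text{the closure of }\mathcal{A}\text{ in }L^p\text{ has nonempty interior in }L^p\}$, with $\inf\emptyset=\infty$; the index is attained if this infimum belongs to the set. *)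

(* Defs.v *)
From HB Require Import structures.
From mathcomp Require Import all_boot all_order all_algebra.
From mathcomp Require Import all_classical all_reals all_analysis.
Set Implicit Arguments. Unset Strict Implicit. Unset Printing Implicit Defensive.
Import Order.TTheory GRing.Theory Num.Theory.
Local Open Scope classical_set_scope.
Local Open Scope ring_scope.

Section Defs.
Context {d : measure_display} {Omega : measurableType d} {R : realType}.
Variable P : probability Omega R.

Definition nonatomic : Prop :=
  forall A : set Omega, measurable A -> (0 < P A)%E ->
    exists B : set Omega, [/\ measurable B, B `<=` A, (0 < P B)%E & (P B < P A)%E].

(* L^infty: measurable and essentially bounded (functions, not classes) *)
Definition Linf (X : Omega -> R) : Prop :=
  measurable_fun setT X /\ exists M : R, {ae P, forall w, `|X w| <= M}.

Definition Lp (p : R) (X : Omega -> R) : Prop :=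
  measurable_fun setT X /\ ('N[P]_(p%:E)[EFin \o X] < +oo)%E.

Definition Lp_dist (p : R) (X Y : Omega -> R) : \bar R :=
  'N[P]_(p%:E)[EFin \o (X \- Y)].

Definition Lp_closure (p : R) (A : set (Omega -> R)) : set (Omega -> R) :=
  [set X | Lp p X /\ forall eps : R, 0 < eps ->
     exists2 Y, A Y & (Lp_dist p X Y < eps%:E)%E].

Definition Lp_int_nonempty (p : R) (B : set (Omega -> R)) : Prop :=
  exists X, Lp p X /\ exists2 eps : R, 0 < eps &
    forall Y, Lp p Y -> (Lp_dist p Y X < eps%:E)%E -> B Y.

Definition rho (B : set (Omega -> R)) (S0 : R) (ST : Omega -> R)
    (X : Omega -> R) : \bar R :=
  ereal_inf [set m%:E | m in [set m : R | B (X \+ (fun w => m / S0 * ST w))]].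

Definition rho_finite_on_Linf (B : set (Omega -> R)) S0 ST : Prop :=
  forall X, Linf X -> rho B S0 ST X \is a fin_num.

Definition index_set (A : set (Omega -> R)) : set R :=
  [set p | 1 <= p /\ Lp_int_nonempty p (Lp_closure p A)].

(* Index_fin, with inf of the empty set = +oo *)
Definition index_fin (A : set (Omega -> R)) : \bar R :=
  ereal_inf [set p%:E | p in index_set A].

Definition traded_asset (S0 : R) (ST : Omega -> R) : Prop :=
  [/\ 0 < S0, measurable_fun setT ST, {ae P, forall w, 0 <= ST w}
    & ~ {ae P, forall w, ST w = 0}].
End Defs.

Definition u_q {R : realType} (q : R) (x : R) : R :=
  if x < 0 then - (`|x| `^ q) else 0.

Definition A_u {d : measure_display} {Omega : measurableType d} {R : realType}
  (P : probability Omega R) (q alpha : R) : set (Omega -> R) :=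
  [set X | Linf P X /\ (\int[P]_w (u_q q (X w))%:E >= alpha%:E)%E].

(* Main.v *)
Require Import Defs.
From HB Require Import structures.
From mathcomp Require Import all_boot all_order all_algebra.
From mathcomp Require Import all_classical all_reals all_analysis.
From mathcomp Require Import measurable_realfun.
From mathcomp Require Import lra ring.
Import Order.TTheory GRing.Theory Num.Theory.
Local Open Scope classical_set_scope.
Local Open Scope ring_scope.

Section H.
Context {d : measure_display} {Omega : measurableType d} {R : realType}.
Variable P : probability Omega R.

Lemma Lp_dist_ltP (p e : R) (X Y : Omega -> R) : (0 < p)%R -> (0 < e)%R ->
  (Lp_dist P p X Y < e%:E)%E <->
  (\int[P]_w (`|X w - Y w| `^ p)%R%:E < (e `^ p)%:E)%E.
Proof.
move=> p0 e0.
have E : (Lp_dist P p X Y `^ p = \int[P]_w (`|X w - Y w| `^ p)%R%:E)%E.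
  by rewrite /Lp_dist poweR_Lnorm ?gt_eqF.
split.
- move=> h; rewrite -E.
  have N0 : (0 <= Lp_dist P p X Y)%E by exact: Lnorm_ge0.
  move: N0 h; case: (Lp_dist P p X Y) => [n| |] //= n0 h.
  rewrite lte_fin; apply: gt0_ltr_powR => //; rewrite ?nnegrE ?ltW //.
- move=> h; rewrite ltNge; apply/negP => H; move: h; apply/negP; rewrite -leNgt -E.
  rewrite -poweR_EFin; apply: (gt0_ler_poweR (ltW p0)) => //.
  + by rewrite in_itv /= lee_fin (ltW e0) leey.
  + by rewrite in_itv /= Lnorm_ge0 leey.
Qed.

Lemma u_qE (q x : R) : (0 < q)%R -> u_q q x = (- (Num.max (- x)%R 0%R) `^ q)%R.
Proof.
move=> q0; rewrite /u_q; case: ifPn => x0.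
- have -> : Num.max (- x)%R 0%R = (- x)%R by apply/max_idPl; rewrite oppr_ge0 ltW.
  by rewrite ltr0_norm.
- have -> : Num.max (- x)%R 0%R = 0%R by apply/max_idPr; rewrite oppr_le0 leNgt.
  by rewrite powR0 ?oppr0 // gt_eqF.
Qed.

Lemma intuE (q : R) (Z : Omega -> R) : (0 < q)%R ->
  (\int[P]_w (u_q q (Z w))%:E = - \int[P]_w ((Num.max (- Z w) 0) `^ q)%R%:E)%E.
Proof.
move=> q0; rewrite -integral_ge0N; last by move=> w _; rewrite lee_fin powR_ge0.
by apply: eq_integral => w _; rewrite u_qE // EFinN.
Qed.

Lemma mpow (q : R) (f : Omega -> R) : measurable_fun setT f ->
  measurable_fun setT (fun w => (f w `^ q)%R%:E).
Proof.
move=> mf; apply/measurable_EFinP.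
exact: (measurableT_comp (measurable_powR q) mf).
Qed.

Lemma attain (q alpha : R) : (1 <= q)%R -> (alpha < 0)%R ->
  Lp_int_nonempty P q (Lp_closure P q (A_u P q alpha)).
Proof.
move=> q1 a0.
have q0 : (0 < q)%R by apply: lt_le_trans q1.
set r := Num.min 1 (- alpha).
have r0 : (0 < r)%R by rewrite lt_min ltr01 oppr_gt0.
have r1 : (r <= 1)%R by rewrite ge_min lexx.
have rc : (r <= - alpha)%R by rewrite ge_min lexx orbT.
exists (fun _ => 0%R); split.
  split; first exact: measurable_cst.
  rewrite (_ : EFin \o _ = cst 0%E) ?Lnorm0 ?ltry //.
  by rewrite eqe gt_eqF.
exists r => // Y LY.
move/(Lp_dist_ltP _ _ _ _ q0 r0) => hY.
have IY : (\int[P]_w (`|Y w| `^ q)%R%:E < (- alpha)%:E)%E.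
  have -> : (\int[P]_w (`|Y w| `^ q)%R%:E = \int[P]_w (`|Y w - 0| `^ q)%R%:E)%E.
    by apply: eq_integral => w _; rewrite subr0.
  apply: (lt_le_trans hY); rewrite lee_fin (le_trans _ rc) //.
  by apply: ge1r_powR => //; rewrite r0 r1.
have mY := LY.1.
split => // e e0.
pose Zn (n : nat) w := if `|Y w| <= n%:R then Y w else 0%R.
have mZ n : measurable_fun setT (Zn n).
  apply: measurable_fun_ifT => //.
  apply: measurable_fun_ler => //.
  by apply: measurableT_comp.
have YZ n w : (`|Y w - Zn n w| <= `|Y w|)%R.
  by rewrite /Zn; case: ifPn => _; rewrite ?subrr ?normr0 ?subr0.
have ZY n w : (`|Zn n w| <= `|Y w|)%R.
  by rewrite /Zn; case: ifPn => _; rewrite ?normr0.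
have Zb n w : (`|Zn n w| <= n%:R)%R.
  by rewrite /Zn; case: ifPn => h; rewrite ?normr0.
have mf_ n : measurable_fun setT (fun w => (`|Y w - Zn n w| `^ q)%R%:E).
  apply: mpow; apply: measurableT_comp => //; exact: measurable_funB.
have f_f : {ae P, forall x, setT x ->
   (fun n => (`|Y x - Zn n x| `^ q)%R%:E) @ \oo --> (cst 0%E : Omega -> \bar R) x}.
  apply: aeW => w _; apply: cvg_near_cst.
  exists (Num.bound `|Y w|) => // n /= Nn.
  rewrite /Zn ifT ?subrr ?normr0 ?powR0 ?gt_eqF //.
  apply: ltW; apply: (lt_le_trans (archi_boundP (normr_ge0 _))).
  by rewrite ler_nat.
have ig : P.-integrable setT (fun w => (`|Y w| `^ q)%R%:E).
  apply/integrableP; split; first by apply: mpow; apply: measurableT_comp.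
  under eq_integral do rewrite /= ger0_norm ?powR_ge0 //.
  exact: lt_trans IY (ltry _).
have f_g : {ae P, forall x n, setT x ->
   (`|(`|Y x - Zn n x| `^ q)%R%:E| <= (`|Y x| `^ q)%R%:E)%E}.
  apply: aeW => w n _; rewrite /= ger0_norm ?powR_ge0 // lee_fin.
  by apply: ge0_ler_powR => //; rewrite ?nnegrE ?normr_ge0 ?ltW.
have [_ H _] := dominated_convergence measurableT mf_ (measurable_cst _) f_f ig f_g.
have ep : (0 < (e `^ q)%:E)%E by rewrite lte_fin powR_gt0.
have on : open_nbhs (0%E : \bar R) [set y | y < (e `^ q)%:E]%E.
  by split; [exact: open_ereal_lt_ereal|].
have [N _ HN] := H _ (open_nbhs_nbhs on).
have {HN} HN := HN N (leqnn N).
exists (Zn N).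
  split.
    split; first exact: mZ.
    by exists N%:R; apply: aeW => w; exact: Zb.
  rewrite intuE // leeNr -EFinN; apply: le_trans (ltW IY).
  apply: ge0_le_integral => //.
  - by move=> w _; rewrite lee_fin powR_ge0.
  - exact/mpow/measurable_funrneg.
  - by apply: mpow; apply: measurableT_comp.
  move=> w _; rewrite lee_fin; apply: ge0_ler_powR; first exact: ltW.
  + by rewrite nnegrE le_max lexx orbT.
  + by rewrite nnegrE normr_ge0.
  rewrite ge_max normr_ge0 andbT; apply: le_trans (ZY N w).
  by rewrite -normrN ler_norm.
apply/(Lp_dist_ltP _ _ _ _ q0 e0); move: HN => /=.
congr (_ < _)%E; apply: eq_integral => w _.
by rewrite subr0 ger0_norm // powR_ge0.
Qed.

Lemma mset_le (f g : Omega -> R) : measurable_fun setT f -> measurable_fun setT g ->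
  measurable [set w | f w <= g w].
Proof.
move=> mf mg.
have h : measurable ([set: Omega] `&` (fun w => f w <= g w) @^-1` [set true]).
  by apply: measurable_fun_ler.
move: h; rewrite setTI; congr measurable; apply/seteqP; split => w //=.
Qed.

Lemma mset_lt (f g : Omega -> R) : measurable_fun setT f -> measurable_fun setT g ->
  measurable [set w | f w < g w].
Proof.
move=> mf mg.
have h : measurable ([set: Omega] `&` (fun w => f w < g w) @^-1` [set true]).
  by apply: measurable_fun_ltr.
move: h; rewrite setTI; congr measurable; apply/seteqP; split => w //=.
Qed.

Lemma mmem (B : set Omega) : measurable B -> measurable_fun setT (fun w => w \in B).
Proof.
move=> mB; apply: (measurable_fun_bool true).
rewrite setTI (_ : _ @^-1` _ = B) //; apply/seteqP; split => w /=.
  by move/set_mem.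
by move/mem_set.
Qed.

Lemma PE {S : set Omega} : measurable S -> P S = (fine (P S))%:E.
Proof.
move=> mS; rewrite fineK // ge0_fin_numE ?measure_ge0 //.
exact: le_lt_trans (probability_le1 P mS) (ltry _).
Qed.

Lemma int_indic (k : R) (S : set Omega) : 0 <= k -> measurable S ->
  (\int[P]_w (k * \1_S w)%R%:E = k%:E * P S)%E.
Proof.
move=> k0 mS; under eq_integral do rewrite EFinM.
rewrite ge0_integralZl_EFin //.
- by rewrite integral_indic // setIT.
- by apply/measurable_EFinP; exact: measurable_indic.
Qed.

Lemma Lp_intE (p : R) (f : Omega -> R) : 0 < p ->
  (('N[P]_(p%:E)[EFin \o f] `^ p) = \int[P]_w (`|f w| `^ p)%R%:E)%E.
Proof. by move=> p0; rewrite poweR_Lnorm ?gt_eqF. Qed.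

Lemma Lp_fin {p : R} {f : Omega -> R} : 0 < p -> Lp P p f -> (\int[P]_w (`|f w| `^ p)%R%:E < +oo)%E.
Proof. by move=> p0 [_ h]; rewrite -Lp_intE //; exact: poweR_lty. Qed.

Lemma Lp_of {p : R} {f : Omega -> R} : 0 < p -> measurable_fun setT f ->
  (\int[P]_w (`|f w| `^ p)%R%:E < +oo)%E -> Lp P p f.
Proof.
move=> p0 mf h; split => //; rewrite ltNge; apply/negP; rewrite leye_eq => /eqP E.
by move: h; rewrite -Lp_intE // E poweRyr ?gt_eqF.
Qed.

Lemma exists_M {X : Omega -> R} : measurable_fun setT X ->
  exists M : nat, (0 < P [set w | (`|X w| <= M%:R)%R])%E.
Proof.
move=> mX; apply: contrapT => hn.
pose F n := [set w | `|X w| <= n%:R].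
have h0 n : P (F n) = 0%E.
  apply/eqP; rewrite eq_le measure_ge0 andbT leNgt; apply/negP => h; apply: hn.
  by exists n.
have mF n : measurable (F n).
  by apply: mset_le; [apply: measurableT_comp | exact: measurable_cst].
have U : \bigcup_n F n = setT.
  apply/seteqP; split => // w _; exists (Num.bound `|X w|) => //=.
  exact: ltW (archi_boundP _).
have nd : nondecreasing_seq F.
  apply/nondecreasing_seqP => n; rewrite subsetEset => w /=.
  by move=> h; apply: le_trans h _; rewrite ler_nat.
have := @nondecreasing_cvg_mu _ _ _ P F mF.
rewrite U => /(_ measurableT nd).
rewrite (_ : _ \o F = cst 0%E); last by apply/funext => n /=.
move=> H; have := cvg_lim (@ereal_hausdorff R) H.
rewrite lim_cst // => h.
have : (0%E : \bar R) = 1%E by rewrite h; exact: probability_setT.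
by move/eqP; rewrite eq_sym eqe oner_eq0.
Qed.

Lemma small_set {A : set Omega} {del : R} : nonatomic P -> measurable A ->
  (0 < P A)%E -> 0 < del ->
  exists B, [/\ measurable B, B `<=` A, (0 < P B)%E & (P B <= del%:E)%E].
Proof.
move=> na mA PA0 del0.
have claim n : exists B, [/\ measurable B, B `<=` A, (0 < P B)%E
     & (P B <= (n.+1%:R^-1)%:E)%E].
  elim: n => [|n [B [mB BA PB0 PBn]]].
    by exists A; split => //; rewrite invr1; exact: probability_le1.
  have [C [mC CB PC0 PCB]] := na B mB PB0.
  have ineq : (fine (P B)) / 2 <= (n.+2%:R)^-1.
    apply: (@le_trans _ _ ((n.+1%:R)^-1 / 2)).
      by apply: ler_wpM2r; [rewrite invr_ge0 ler0n | rewrite -lee_fin -PE].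
    rewrite -invfM lef_pV2 ?posrE ?mulr_gt0 ?ltr0n // -(natr1 n.+1).
    have : (1 <= n.+1%:R :> R) by rewrite ler1n.
    lra.
  have PBC : P (B `\` C) = (fine (P B) - fine (P C))%:E.
    have PBfin : (P B < +oo)%E by rewrite (PE mB) ltry.
    apply: (eq_trans (measureD mB mC PBfin)); rewrite setIidr // EFinB.
    by congr (_ - _)%E; exact: PE.
  rewrite (PE mB) in PB0 PCB; rewrite (PE mC) in PC0 PCB.
  move: PB0 PC0 PCB; rewrite !lte_fin => b0 c0 cb.
  have [cb2|cb2] := leP (fine (P C)) (fine (P B) / 2).
    exists C; split => //; first exact: subset_trans CB BA.
      by rewrite (PE mC) lte_fin.
    by rewrite (PE mC) lee_fin; exact: le_trans cb2 ineq.
  exists (B `\` C); split.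
  - exact: measurableD.
  - by move=> w [/BA].
  - by rewrite PBC lte_fin subr_gt0.
  - rewrite PBC lee_fin; apply: le_trans ineq; lra.
have [B [mB BA PB0 PBn]] := claim (Num.bound del^-1).
exists B; split => //; apply: le_trans PBn _; rewrite lee_fin.
rewrite -[X in _ <= X]invrK lef_pV2 ?posrE ?invr_gt0 ?ltr0n //.
apply: ltW; apply: lt_le_trans (archi_boundP _) _; first by rewrite invr_ge0 ltW.
by rewrite ler_nat.
Qed.

Lemma noint (p q alpha : R) : nonatomic P -> 1 <= p -> p < q -> alpha < 0 ->
  ~ Lp_int_nonempty P p (Lp_closure P p (A_u P q alpha)).
Proof.
move=> na p1 pq a0 [X [LX [eps eps0 Hb]]].
have p0 : 0 < p by apply: lt_le_trans p1.
have q0 : 0 < q by apply: lt_trans pq.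
have qp0 : 0 < q - p by rewrite subr_gt0.
set c := - alpha.
have c0 : 0 < c by rewrite oppr_gt0.
have mX := LX.1.
have [M PM] := exists_M mX.
have mA0 : measurable [set w | `|X w| <= M%:R].
  by apply: mset_le; [apply: measurableT_comp | exact: measurable_cst].
set K0 := (2 * c * 3 `^ p / eps `^ p) `^ (q - p)^-1.
set T := Num.max (M%:R + 1) (K0 + 1).
have K00 : 0 <= K0 by apply: powR_ge0.
have T0 : 0 < T by rewrite lt_max; apply/orP; right; lra.
have TM : M%:R <= T by rewrite le_max; apply/orP; left; lra.
have TK : K0 < T by rewrite lt_max; apply/orP; right; lra.
set del := 2 * c / T `^ q.
have Tq0 : 0 < T `^ q by apply: powR_gt0.
have del0 : 0 < del by rewrite divr_gt0 // mulr_gt0.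
have [B [mB BA PB0 PBd]] := small_set na mA0 PM del0.
set b := fine (P B).
have Pb : P B = b%:E := PE mB.
have b0 : 0 < b by rewrite -lte_fin -Pb.
have bd : b <= del by rewrite -lee_fin -Pb.
set L := (2 * c / b) `^ q^-1.
have cb0 : 0 < 2 * c / b by rewrite divr_gt0 // mulr_gt0.
have L0 : 0 < L by apply: powR_gt0.
have Lq : L `^ q = 2 * c / b.
  by rewrite -powRrM mulVf ?gt_eqF // powRr1 // ltW.
have LT : T <= L.
  have -> : T = (T `^ q) `^ q^-1 by rewrite -powRrM divff ?gt_eqF // powRr1 // ltW.
  apply: ge0_ler_powR; rewrite ?nnegrE ?invr_ge0 ?powR_ge0 ?(ltW q0) ?(ltW cb0) //.
  have -> : T `^ q = 2 * c / del by rewrite /del invf_div mulrC divfK // mulf_neq0 // gt_eqF.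
  by rewrite ler_pM2l ?mulr_gt0 // lef_pV2 ?posrE.
have LM : M%:R <= L := le_trans TM LT.
have LK : K0 < L := lt_le_trans TK LT.
pose Y w := if w \in B then - (2 * L) else X w.
have mY : measurable_fun setT Y.
  by apply: measurable_fun_ifT; [exact: mmem | exact: measurable_cst | exact: mX].
have IX := Lp_fin p0 LX.
have mnp (f : Omega -> R) : measurable_fun setT f ->
    measurable_fun setT (fun w => (`|f w| `^ p)%R%:E).
  by move=> mf; apply: mpow; apply: measurableT_comp.
have LY : Lp P p Y.
  apply: Lp_of => //.
  apply: (@le_lt_trans _ _ (\int[P]_w ((`|X w| `^ p) + (2 * L) `^ p)%R%:E)%E).
    apply: ge0_le_integral => //.
    - exact: (mnp _ mY).
    - apply/measurable_EFinP; apply: measurable_funD; last exact: measurable_cst.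
      by apply: measurableT_comp (measurable_powR _) _; apply: measurableT_comp.
    move=> w _; rewrite lee_fin /Y; case: ifPn => _.
      by rewrite normrN ger0_norm ?mulr_ge0 ?ler_wpDl ?powR_ge0 // ltW.
    by rewrite lerDl powR_ge0.
  under eq_integral do rewrite EFinD.
  rewrite ge0_integralD //; last 2 first.
  - exact: (mnp _ mX).
  - by move=> w _; rewrite lee_fin powR_ge0.
  have -> : (\int[P]_w ((2 * L) `^ p)%R%:E = ((2 * L) `^ p)%:E)%E.
    rewrite integral_cst //.
    apply: (@eq_trans _ _ (((2 * L) `^ p)%:E * 1)%E); last by rewrite mule1.
    by congr (_ * _)%E; exact: probability_setT.
  exact: lte_add_pinfty IX (ltry _).
have dYX : (Lp_dist P p Y X < eps%:E)%E.
  apply/(Lp_dist_ltP _ _ _ _ p0 eps0).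
  apply: (@le_lt_trans _ _ (\int[P]_w ((3 * L) `^ p * \1_B w)%R%:E)%E).
    apply: ge0_le_integral => //.
    - by apply: mnp; apply: measurable_funB.
    - apply/measurable_EFinP; apply: measurable_funM; first exact: measurable_cst.
      exact: measurable_indic.
    move=> w _; rewrite lee_fin /Y indicE; case: ifPn => wB.
      rewrite mulr1; apply: ge0_ler_powR; rewrite ?nnegrE ?normr_ge0 ?(ltW p0) //.
        by rewrite mulr_ge0 // ltW.
      have := BA _ (set_mem wB); rewrite /= => hX.
      rewrite -opprD normrN (le_trans (ler_normD _ _)) //.
      by rewrite ger0_norm ?mulr_ge0 ?(ltW L0) //; lra.
    by rewrite subrr normr0 powR0 ?gt_eqF // mulr0.
  rewrite int_indic ?powR_ge0 // Pb -EFinM lte_fin.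
  have Lqp : L `^ (q - p) * L `^ p = 2 * c / b.
    by rewrite -powRD ?subrK // implybE gt_eqF ?orbT.
  have K0e : K0 `^ (q - p) = 2 * c * 3 `^ p / eps `^ p.
    rewrite -powRrM mulVf ?gt_eqF // powRr1 //.
    by rewrite divr_ge0 ?powR_ge0 // mulr_ge0 ?powR_ge0 // mulr_ge0 // ltW.
  have KL : K0 `^ (q - p) < L `^ (q - p).
    by apply: gt0_ltr_powR; rewrite ?nnegrE ?(ltW L0).
  rewrite K0e in KL.
  have e0p : 0 < eps `^ p by apply: powR_gt0.
  have t0 : 0 < 3 `^ p by apply: powR_gt0.
  have a0' : 0 < L `^ p by apply: powR_gt0.
  have r0 : 0 < L `^ (q - p) by apply: powR_gt0.
  rewrite ltr_pdivrMr // in KL.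
  have hb : b * (L `^ (q - p) * L `^ p) = 2 * c by rewrite Lqp mulrC divfK // gt_eqF.
  rewrite powRM ?ler0n ?(ltW L0) //.
  move: KL hb; set t := 3 `^ p; set a := L `^ p; set Lr := L `^ (q - p);
    set E := eps `^ p => KL hb.
  rewrite -(ltr_pM2r r0).
  have -> : t * a * b * Lr = 2 * c * t by rewrite -hb; ring.
  by rewrite (mulrC E).
have [_ cl] := Hb Y LY dYX.
have hb2 : 0 < b / 2 by rewrite divr_gt0.
set e := L * (b / 2) `^ p^-1.
have e0 : 0 < e by rewrite mulr_gt0 // powR_gt0.
have [Z [[mZ _] AZ] dYZ] := cl e e0.
move/(Lp_dist_ltP _ _ _ _ p0 e0) : dYZ => dYZ.
have ep : e `^ p = L `^ p * (b / 2).
  rewrite powRM ?(ltW L0) ?powR_ge0 // -powRrM mulVf ?gt_eqF // powRr1 //.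
  exact: ltW.
rewrite ep in dYZ.
set S := [set w | Z w < - L].
have mS : measurable S by apply: mset_lt => //; exact: measurable_cst.
have PS : (P S <= (b / 2)%:E)%E.
  have h1 : (\int[P]_w (L `^ q * \1_S w)%R%:E <=
             \int[P]_w ((Num.max (- Z w) 0) `^ q)%R%:E)%E.
    apply: ge0_le_integral => //.
    - by move=> w _; rewrite lee_fin mulr_ge0 ?powR_ge0 ?indic_ge0.
    - apply/measurable_EFinP; apply: measurable_funM; first exact: measurable_cst.
      exact: measurable_indic.
    - exact/mpow/measurable_funrneg.
    move=> w _; rewrite lee_fin indicE; have [wS|wS] := boolP (w \in S).
      rewrite mulr1.
      apply: ge0_ler_powR; rewrite ?nnegrE ?(ltW q0) ?(ltW L0) //.
        by rewrite le_max lexx orbT.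
      have := set_mem wS; rewrite /S /= => hZ.
      by rewrite le_max; apply/orP; left; lra.
    by rewrite mulr0 powR_ge0.
  have h2 : (\int[P]_w ((Num.max (- Z w) 0) `^ q)%R%:E <= c%:E)%E.
    by move: AZ; rewrite intuE // leeNr /c EFinN.
  have := le_trans h1 h2; rewrite int_indic ?powR_ge0 // Lq (PE mS) -EFinM lee_fin.
  rewrite lee_fin => h3.
  have hk : 2 * c / b * b = 2 * c by rewrite divfK // gt_eqF.
  move: h3 hk; set k := 2 * c / b; set s := fine (P S) => h3 hk.
  rewrite -(ler_pM2l cb0) -/k.
  have -> : k * (b / 2) = c by rewrite mulrA hk; field.
  exact: h3.
set G := B `\` S.
have mG : measurable G by exact: measurableD.
have low : (\int[P]_w (L `^ p * \1_G w)%R%:E <=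
            \int[P]_w (`|Y w - Z w| `^ p)%R%:E)%E.
  apply: ge0_le_integral => //.
  - by move=> w _; rewrite lee_fin mulr_ge0 ?powR_ge0 ?indic_ge0.
  - apply/measurable_EFinP; apply: measurable_funM; first exact: measurable_cst.
    exact: measurable_indic.
  - by apply: mnp; apply: measurable_funB.
  move=> w _; rewrite lee_fin indicE; have [wG|wG] := boolP (w \in G).
    rewrite mulr1.
    have [wB wS] := set_mem wG.
    rewrite /Y (mem_set wB).
    apply: ge0_ler_powR; rewrite ?nnegrE ?normr_ge0 ?(ltW p0) ?(ltW L0) //.
    have hZ : - L <= Z w by rewrite leNgt; apply/negP => h; apply: wS.
    by rewrite ler_normr; apply/orP; right; lra.
  by rewrite mulr0 powR_ge0.
rewrite int_indic ?powR_ge0 // in low.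
have PG : P G = (b - fine (P (B `&` S)))%:E.
  have PBfin : (P B < +oo)%E by rewrite Pb ltry.
  apply: (eq_trans (measureD mB mS PBfin)); rewrite EFinB.
  congr (_ - _)%E; first exact: Pb.
  by apply: PE; exact: measurableI.
have PBS : fine (P (B `&` S)) <= b / 2.
  rewrite -lee_fin -PE; last exact: measurableI.
  apply: le_trans PS; apply: le_measure; rewrite ?inE //; exact: measurableI.
rewrite PG -EFinM in low.
have := le_lt_trans low dYZ; rewrite lte_fin.
have a0' : 0 < L `^ p by apply: powR_gt0.
rewrite ltr_pM2l //; lra.
Qed.
End H.

Theorem corollary6p8 (d : measure_display) (Omega : measurableType d)
  (R : realType) (P : probability Omega R) (q alpha S0 : R) (ST : Omega -> R) :
  nonatomic P -> 1 <= q -> alpha < 0 ->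
  traded_asset P S0 ST -> Linf P ST ->
  rho_finite_on_Linf P (A_u P q alpha) S0 ST ->
  index_fin P (A_u P q alpha) = q%:E /\ index_set P (A_u P q alpha) q.
Proof.
move=> na q1 a0 _ _ _.
have Iq : index_set P (A_u P q alpha) q by split => //; exact: attain.
split => //.
apply/eqP; rewrite eq_le; apply/andP; split.
  by apply: ereal_inf_lbound; exists q.
apply: le_ereal_inf_tmp => _ [p [p1 Hp] <-]; rewrite lee_fin.
rewrite leNgt; apply/negP => pq.
exact: (@noint _ _ _ P p q alpha na p1 pq a0 Hp).
Qed.
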